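(* Let $T_1$ be a quadtree in $\mathbb{R}^d$ and let $j \ge 1$. Given the set of cells $T_j$ with brand $j$ (as in the construction of the extended quadtree described in the context), the set $T_{j+1}$ of cells that balance the cells of $T_j$ is unique.
   Context: A quadtree on an axis-aligned root hypercube $R\subset\mathbb{R}^d$ is a hierarchical decomposition in which every node has an associated axis-aligned hypercube (cell) and is either a leaf or has $2^d$ equal-sized children whose cells subdivide its cell. The size $|C|$ of a cell is its edge length. Two cells are neighbors if they are interior-disjoint and share (part of) a $(d-1)$-dimensional facet. For an integer $j$, a cell $C$ is $2^j$-smooth if every leaf neighboring $C$ has size at most $2^j|C|$. Extended quadtree: the cells of a given quadtree $T_1$ are called true cells and get brand $1$. Recursively, for $j\ge1$, let $T^j$ be the quadtree formed by $\bigcup_{i\le j}T_i$, and let $T_{j+1}$ be the minimal set of cells obtained by splitting cells of $T^j$ such that every cell of $T_j$ is $2^j$-smooth in the resulting quadtree; the cells of $T_{j+1}$ get brand $j+1$. The extended quadtree is $T^*=T^{d+1}$. *)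

(* Defs.v *)
From HB Require Import structures.
From mathcomp Require Import all_boot all_order all_algebra.
From mathcomp Require Import finmap.
Set Implicit Arguments. Unset Strict Implicit. Unset Printing Implicit Defensive.
Import Order.TTheory GRing.Theory Num.Theory.

Local Open Scope fset_scope.

(* Cells of a quadtree on the root hypercube R = [0,1]^d (WLOG, by an affine
   change of coordinates, which preserves sizes ratios, neighborhood and
   smoothness).  A cell at depth k with integer coordinate vector v
   (0 <= v i < 2^k) is the cube  prod_i [v_i / 2^k, (v_i + 1) / 2^k]. *)
Definition cell (d : nat) := (nat * {ffun 'I_d -> nat})%type.

Section Cells.
Variable d : nat.
Implicit Types c C L : cell d.

Definition level c : nat := c.1.
Definition coord c (i : 'I_d) : nat := c.2 i.

Definition valid_cell c : bool := [forall i, coord c i < 2 ^ level c].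

Definition root_cell : cell d := (0%N, [ffun=> 0%N]).

Definition lo c (i : 'I_d) : rat := (coord c i)%:R / (2 ^ level c)%:R.
Definition hi c (i : 'I_d) : rat := (coord c i).+1%:R / (2 ^ level c)%:R.

Definition csize c : rat := 1 / (2 ^ level c)%:R.

Definition interior_disjoint C C' : Prop :=
  exists i, (hi C i <= lo C' i)%R \/ (hi C' i <= lo C i)%R.

Definition share_facet_part C C' : Prop :=
  exists i, (hi C i = lo C' i \/ hi C' i = lo C i) /\
    forall i', i' != i ->
      (Order.max (lo C i') (lo C' i') < Order.min (hi C i') (hi C' i'))%R.

Definition neighbors C C' : Prop := interior_disjoint C C' /\ share_facet_part C C'.

Definition is_child c c' : bool :=
  (level c' == (level c).+1) && [forall i, (coord c' i)./2 == coord c i].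

Definition parent c : cell d := ((level c).-1, [ffun i => (coord c i)./2]).

Definition is_quadtree (Q : {fset cell d}) : Prop :=
  [/\ root_cell \in Q,
      forall c, c \in Q -> valid_cell c &
      forall c, c \in Q -> (0 < level c)%N ->
        parent c \in Q /\ forall c', is_child (parent c) c' -> c' \in Q].

Definition is_leaf (Q : {fset cell d}) c : Prop :=
  c \in Q /\ forall c', is_child c c' -> c' \notin Q.

Definition smooth (Q : {fset cell d}) (j : nat) C : Prop :=
  forall L, is_leaf Q L -> neighbors C L ->
    (csize L <= (2 ^ j)%:R * csize C)%R.

Definition balancing (Tup Tj : {fset cell d}) (j : nat) (S : {fset cell d}) : Prop :=
  [/\ forall c, c \in S -> c \notin Tup,
      is_quadtree (Tup `|` S) &
      forall C, C \in Tj -> smooth (Tup `|` S) j C].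

Definition minimal_balancing (Tup Tj : {fset cell d}) (j : nat) (S : {fset cell d}) : Prop :=
  balancing Tup Tj j S /\
  forall S', balancing Tup Tj j S' -> S' `<=` S -> S' = S.

Fixpoint Tupto (T : nat -> {fset cell d}) (i : nat) : {fset cell d} :=
  match i with
  | 0 => fset0
  | i'.+1 => Tupto T i' `|` T i'.+1
  end.

(* T : brand -> cells of that brand is a (partial) run of the extended quadtree
   construction up to brand j *)
Definition extended_run (T : nat -> {fset cell d}) (j : nat) : Prop :=
  is_quadtree (T 1%N) /\
  forall i, (1 <= i < j)%N -> minimal_balancing (Tupto T i) (T i) i (T i.+1).

End Cells.

(* Main.v *)
Require Import Defs.
From HB Require Import structures.
From mathcomp Require Import all_boot all_order all_algebra.
From mathcomp Require Import finmap.
From Stdlib Require Import Classical.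
Set Implicit Arguments. Unset Strict Implicit.
Local Open Scope fset_scope.

Section Aux.
Variable d : nat.

Lemma parent_child (L c : cell d) : is_child L c -> parent c = L.
Proof.
case/andP => /eqP Hl /forallP Hc.
case: L Hl Hc => l f /= Hl Hc; rewrite /parent Hl /=; congr pair.
by apply/ffunP => i; rewrite ffunE; apply/eqP; exact: Hc.
Qed.

Lemma quadtree_inter (Q1 Q2 Q : {fset cell d}) :
  is_quadtree Q1 -> is_quadtree Q2 ->
  (forall x, (x \in Q) = (x \in Q1) && (x \in Q2)) -> is_quadtree Q.
Proof.
move=> [r1 v1 p1] [r2 v2 p2] HQ; split.
- by rewrite HQ r1 r2.
- by move=> c; rewrite HQ => /andP [/v1].
- move=> c; rewrite HQ => /andP [c1 c2] lc.
  have [a1 b1] := p1 c c1 lc; have [a2 b2] := p2 c c2 lc.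
  split; first by rewrite HQ a1 a2.
  by move=> c' Hc'; rewrite HQ (b1 _ Hc') (b2 _ Hc').
Qed.

Lemma leaf_inter (Q1 Q2 Q : {fset cell d}) L :
  is_quadtree Q1 -> is_quadtree Q2 ->
  (forall x, (x \in Q) = (x \in Q1) && (x \in Q2)) ->
  is_leaf Q L -> is_leaf Q1 L \/ is_leaf Q2 L.
Proof.
move=> [r1 v1 p1] [r2 v2 p2] HQ [LQ Hl].
move: (LQ); rewrite HQ => /andP [L1 L2].
case: (classic (is_leaf Q1 L)) => [|N1]; first by left.
case: (classic (is_leaf Q2 L)) => [|N2]; first by right.
exfalso.
have [c1 [ch1 in1]] : exists c, is_child L c /\ c \in Q1.
  apply: NNPP => H; apply: N1; split => // c' Hc'; apply/negP => Hin.
  by apply: H; exists c'.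
have [c2 [ch2 in2]] : exists c, is_child L c /\ c \in Q2.
  apply: NNPP => H; apply: N2; split => // c' Hc'; apply/negP => Hin.
  by apply: H; exists c'.
have lc2 : (0 < level c2)%N by case/andP: ch2 => /eqP ->.
have [_ b2] := p2 c2 in2 lc2.
have : c1 \in Q2 by apply: b2; rewrite (parent_child ch2).
move=> in12.
by move: (Hl c1 ch1); rewrite HQ in1 in12.
Qed.

Lemma balancing_inter (Tup Tj : {fset cell d}) j S1 S2 :
  balancing Tup Tj j S1 -> balancing Tup Tj j S2 ->
  balancing Tup Tj j (S1 `&` S2).
Proof.
move=> [d1 q1 s1] [d2 q2 s2].
have HQ : forall x, (x \in Tup `|` S1 `&` S2) =
   (x \in Tup `|` S1) && (x \in Tup `|` S2).
  by move=> x; rewrite !inE; case: (x \in Tup); case: (x \in S1).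
split.
- by move=> c; rewrite inE => /andP [/d1].
- exact: quadtree_inter q1 q2 HQ.
- move=> C HC L HL HN.
  case: (leaf_inter q1 q2 HQ HL) => H.
  + exact: s1.
  + exact: s2.
Qed.

Lemma minimal_exists (Tup Tj : {fset cell d}) j n :
  forall S, (#|` S| <= n)%N -> balancing Tup Tj j S ->
  exists S', minimal_balancing Tup Tj j S'.
Proof.
elim: n => [|n IH] S Hs Hb.
  exists S; split => // S' _ HS'.
  move: Hs; rewrite leqn0 cardfs_eq0 => /eqP E; subst S.
  by apply/eqP; rewrite eqEfsubset HS' fsub0set.
case: (classic (minimal_balancing Tup Tj j S)) => [H|H]; first by exists S.
have [S' [b' [sub' ne']]] : exists S', balancing Tup Tj j S' /\ S' `<=` S /\ S' <> S.
  apply: NNPP => K; apply: H; split => // S' b' s'.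
  apply: NNPP => ne; apply: K; exists S'; tauto.
apply: (IH S') b'.
have : S' `<` S by rewrite fproperEneq sub' andbT; apply/eqP.
move/fproper_ltn_card => lt; rewrite -ltnS; exact: leq_trans lt Hs.
Qed.

Definition fullseq N : seq (cell d) :=
  flatten [seq [seq ((k, [ffun i => nat_of_ord (f i)]) : cell d)
                 | f : {ffun 'I_d -> 'I_(2^N).+1} <- enum {ffun 'I_d -> 'I_(2^N).+1}] | k <- iota 0 N.+1].

Definition Full N : {fset cell d} :=
  [fset c | c in [seq c <- fullseq N | valid_cell c]].

Lemma in_Full N c : (c \in Full N) = (level c <= N)%N && valid_cell c.
Proof.
rewrite inE /= mem_filter andbC.
apply/andP/andP => [[/flatten_mapP [k] + /mapP [f _ E]] V|[Hl V]].
  rewrite mem_iota add0n => /andP [_ Hk]; split => //; rewrite E; exact: Hk.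
split => //; apply/flatten_mapP; exists (level c); first by rewrite mem_iota.
apply/mapP.
exists [ffun i : 'I_d => (inord (Defs.coord c i) : 'I_(2^N).+1)]; first by rewrite mem_enum.
case: c Hl V => l f /= Hl /forallP V; congr pair; apply/ffunP => i.
rewrite !ffunE inordK //.
apply: leq_trans (V i) _ => /=; apply: leq_trans (leqnSn _); exact: leq_pexp2l.
Qed.

Lemma exp2S l : (2 ^ l.+1 = (2 ^ l).*2)%N.
Proof. by rewrite expnS mul2n. Qed.

Lemma full_quadtree N : is_quadtree (Full N).
Proof.
split.
- by rewrite in_Full /=; apply/forallP => i; rewrite /Defs.coord ffunE.
- by move=> c; rewrite in_Full => /andP [].
- move=> c; rewrite in_Full => /andP [Hl /forallP V] lc.
  case: c Hl V lc => [[|l] f] //= Hl V _.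
  have Vp : forall i, ((Defs.coord (l.+1, f) i)./2 < 2 ^ l)%N.
    by move=> i; rewrite ltn_half_double -exp2S; exact: V.
  split.
  + rewrite in_Full /=; apply/andP; split; first exact: ltnW.
    apply/forallP => i; rewrite /Defs.coord /= ffunE; exact: Vp.
  + move=> c' /andP [/eqP Hl' /forallP Hc'].
    rewrite in_Full Hl' /=; apply/andP; split => //.
    apply/forallP => i; rewrite Hl' /= exp2S -ltn_half_double.
    move/eqP: (Hc' i) => ->; rewrite /Defs.coord /= ffunE; exact: Vp.
Qed.

Lemma full_leaf N L : is_leaf (Full N) L -> level L = N.
Proof.
move=> [LF Hl]; move: (LF); rewrite in_Full => /andP [lN /forallP V].
apply/eqP; rewrite eqn_leq lN /=; rewrite leqNgt; apply/negP => lt.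
pose c' : cell d := ((level L).+1, [ffun i => (Defs.coord L i).*2]).
have ch : is_child L c'.
  apply/andP; split => //; apply/forallP => i.
  by rewrite /Defs.coord /= ffunE doubleK.
have := Hl c' ch; rewrite in_Full /= lt /=; apply/negP/negPn.
apply/forallP => i; rewrite /Defs.coord /= ffunE exp2S ltn_double; exact: V.
Qed.

Import Order.TTheory GRing.Theory Num.Theory.
Local Open Scope ring_scope.
Lemma full_smooth N j C : (level C <= N)%N -> smooth (Full N) j C.
Proof.
move=> lC L HL _; rewrite /csize (full_leaf HL).
set a : rat := (2 ^ level C)%N%:R; set b : rat := (2 ^ N)%N%:R; set c : rat := (2 ^ j)%N%:R.
have a0 : (0 < a)%R by rewrite /a ltr0n expn_gt0.
have ab : (a <= b)%R by rewrite /a /b ler_nat leq_pexp2l.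
have c1 : (1 <= c)%R by rewrite /c ler1n expn_gt0.
have b0 : (0 < b)%R by apply: Order.POrderTheory.lt_le_trans ab.
rewrite !GRing.div1r.
apply: Order.POrderTheory.le_trans (_ : (a^-1 <= _)%R).
  by rewrite Num.Theory.lef_pV2 // Num.Theory.posrE.
by rewrite Num.Theory.ler_peMl // Num.Theory.invr_ge0 Order.POrderTheory.ltW.
Qed.
Local Close Scope ring_scope.

End Aux.

Theorem lemma12 (d : nat) (T : nat -> {fset cell d}) (j : nat) :
  (1 <= j)%N -> extended_run T j ->
  exists! S : {fset cell d}, minimal_balancing (Tupto T j) (T j) j S.
Proof.
move=> j1 [q1 run].
have qT : is_quadtree (Tupto T j).
  case: j j1 run => [|[|j']] // _ run.
    by rewrite /= fset0U.
  have [[_ q _] _] := run j'.+1 (ltnSn _).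
  exact: q.
have sub : forall C, C \in T j -> C \in Tupto T j.
  by case: j j1 {run qT} => [|j'] // _ C HC; rewrite /= inE HC orbT.
set Tup := Tupto T j.
set N := \max_(c <- Tup) level c.
have lN : forall c, c \in Tup -> (level c <= N)%N.
  by move=> c Hc; apply: leq_bigmax_seq.
have TF : forall c, c \in Tup -> c \in Full d N.
  case: qT => _ V _ c Hc; rewrite in_Full lN //; exact: V.
have E : Tup `|` (Full d N `\` Tup) = Full d N.
  apply/fsetP => x; rewrite in_fsetU in_fsetD; case H: (x \in Tup) => //=.
  by rewrite TF.
have b0 : balancing Tup (T j) j (Full d N `\` Tup).
  split.
  - by move=> c; rewrite !inE => /andP [].
  - by rewrite E; exact: full_quadtree.
  - by move=> C HC; rewrite E; apply: full_smooth; apply: lN; apply: sub.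
have [S HS] := minimal_exists (leqnn _) b0.
exists S; split => // S' HS'.
have bI := balancing_inter HS.1 HS'.1.
have e1 := HS.2 _ bI (fsubsetIl _ _).
have e2 := HS'.2 _ bI (fsubsetIr _ _).
by rewrite -e1 e2.
Qed.
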